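(* Let $A$ be the $C^*$-subalgebra of $l^\infty(\mathbb N)$ consisting of all bounded sequences $\{a_n\}_{n\in\mathbb N}$ such that $\lim_{n\to\infty}|a_{n+1}-a_n|=0$ (so $A=C(\nu\mathbb N)$, where $\nu\mathbb N$ is the Higson compactification of $\mathbb N$). Then $A$ is $C^*$-reflexive.
   Context: A $C^*$-algebra $A$ is called $C^*$-reflexive if the standard Hilbert $A$-module $H_A=l_2(A)$ (sequences $(a_i)$ in $A$ with $\sum_ia_i^*a_i$ norm convergent, inner product $\langle a,b\rangle=\sum_i a_i^*b_i$) satisfies $H_A''=H_A$, where for a Hilbert $A$-module $M$, $M'$ denotes the module of bounded $A$-module maps $M\to A$, $M''=(M')'$ (Paschke's conventions), and $M\subseteq M''$ via the canonical isometric inclusion. *)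

(* Defs.v *)
From Stdlib Require Import Reals.
From Coquelicot Require Import Coquelicot.
Open Scope R_scope.

Definition seqC := nat -> C.

Definition inA (a : seqC) : Prop :=
  (exists M : R, forall n, Cmod (a n) <= M) /\
  is_lim_seq (fun n => Cmod (Cminus (a (S n)) (a n))) 0.

Definition normA_le (a : seqC) (r : R) : Prop := forall n, Cmod (a n) <= r.

(** Raw sequences (x_i)_i of elements of l^oo: x i is the i-th coordinate. *)
Definition HAraw := nat -> seqC.

(** Partial sums  sum_{i=0}^N |x_i(m)|^2  of <x,x> = sum_i x_i^* x_i, evaluated at m. *)
Definition psum (x : HAraw) (m N : nat) : R :=
  sum_n (fun i => (Cmod (x i m)) ^ 2) N.

(** Membership in H_A = l_2(A): all x_i in A and sum_i x_i^* x_i norm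
    (i.e. uniformly) convergent in A. *)
Definition inHA (x : HAraw) : Prop :=
  (forall i, inA (x i)) /\
  (forall eps : R, 0 < eps -> exists N : nat,
     forall p q m : nat, (N <= p)%nat -> (N <= q)%nat ->
       Rabs (psum x m p - psum x m q) < eps).

(** ||x||_{H_A} <= r, i.e. ||<x,x>||_A <= r^2. *)
Definition HA_norm_le (x : HAraw) (r : R) : Prop :=
  0 <= r /\ forall m N, psum x m N <= r ^ 2.

Definition HA_add (x y : HAraw) : HAraw := fun i n => Cplus (x i n) (y i n).
Definition HA_act (x : HAraw) (a : seqC) : HAraw := fun i n => Cmult (x i n) (a n).

(** Candidate elements of H_A' : maps H_A -> A (only values on H_A matter). *)
Definition dualT := HAraw -> seqC.

Definition in_dual (f : dualT) : Prop :=
  (forall x, inHA x -> inA (f x)) /\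
  (forall x y, inHA x -> inHA y ->
     f (HA_add x y) = (fun n => Cplus (f x n) (f y n))) /\
  (forall x a, inHA x -> inA a ->
     f (HA_act x a) = (fun n => Cmult (f x n) (a n))) /\
  (exists K : R, 0 <= K /\
     forall x r, inHA x -> HA_norm_le x r -> normA_le (f x) (K * r)).

(** Module structure of H_A' (Paschke): (f + g)(x) = f x + g x,
    (f . a)(x) = a^* f(x). *)
Definition dual_add (f g : dualT) : dualT := fun x n => Cplus (f x n) (g x n).
Definition dual_act (f : dualT) (a : seqC) : dualT :=
  fun x n => Cmult (Cconj (a n)) (f x n).

Definition dual_norm_le (f : dualT) (r : R) : Prop :=
  0 <= r /\ forall x s, inHA x -> HA_norm_le x s -> normA_le (f x) (r * s).

Definition in_bidual (F : dualT -> seqC) : Prop :=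
  (forall f, in_dual f -> inA (F f)) /\
  (forall f g, in_dual f -> in_dual g ->
     F (dual_add f g) = (fun n => Cplus (F f n) (F g n))) /\
  (forall f a, in_dual f -> inA a ->
     F (dual_act f a) = (fun n => Cmult (F f n) (a n))) /\
  (exists K : R, 0 <= K /\
     forall f r, in_dual f -> dual_norm_le f r -> normA_le (F f) (K * r)).

(** A is C*-reflexive: every element of H_A'' is in the image of the canonical
    inclusion H_A -> H_A'', x |-> (f |-> f(x)^* ). *)
Definition A_Cstar_reflexive : Prop :=
  forall F : dualT -> seqC, in_bidual F ->
    exists x : HAraw, inHA x /\
      forall f, in_dual f -> F f = (fun n => Cconj (f x n)).

(* Main.v *)
Require Import Defs.
From Stdlib Require Import Arith Reals Lra Lia Psatz Classical ClassicalEpsilon FunctionalExtensionality.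
From Coquelicot Require Import Coquelicot.
Open Scope R_scope.

Lemma Cconj_R (r : R) : Cconj (RtoC r) = RtoC r.
Proof. unfold Cconj, RtoC; simpl; f_equal; ring. Qed.
Lemma Cconj_0 : Cconj (RtoC 0) = RtoC 0.
Proof. apply Cconj_R. Qed.
Lemma Cconj_1 : Cconj (RtoC 1) = RtoC 1.
Proof. apply Cconj_R. Qed.
Lemma Cmult_0_l' (z : C) : Cmult (RtoC 0) z = RtoC 0.
Proof. ring. Qed.
Lemma Cmult_1_l' (z : C) : Cmult (RtoC 1) z = z.
Proof. ring. Qed.
Lemma Cmod_sq_conj (z : C) : Cmult (Cconj z) z = RtoC (Cmod z ^ 2).
Proof. rewrite Cmod2_conj. ring. Qed.
Lemma C_zero_of_small (z : C) : (forall eta, 0 < eta -> Cmod z <= eta) -> z = RtoC 0.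
Proof.
  intros H. apply Cmod_eq_0. apply Rle_antisym; [|apply Cmod_ge_0].
  apply Rnot_lt_le; intro Hc. specialize (H (Cmod z / 2)). lra.
Qed.

Fixpoint rsum (u : nat -> R) (N : nat) : R :=
  match N with O => u O | S N' => rsum u N' + u (S N') end.
Fixpoint csum (u : nat -> C) (N : nat) : C :=
  match N with O => u O | S N' => Cplus (csum u N') (u (S N')) end.

Lemma sum_n_rsum (u : nat -> R) N : sum_n u N = rsum u N.
Proof. induction N; simpl. apply sum_O. rewrite sum_Sn, IHN. reflexivity. Qed.

Lemma psum_rsum x m N : psum x m N = rsum (fun i => Cmod (x i m) ^ 2) N.
Proof. unfold psum. apply sum_n_rsum. Qed.

Lemma rsum_ext u v N : (forall i, (i <= N)%nat -> u i = v i) -> rsum u N = rsum v N.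
Proof. induction N; intros H; simpl. apply H; lia. rewrite IHN by (intros; apply H; lia). rewrite H by lia. reflexivity. Qed.
Lemma csum_ext u v N : (forall i, (i <= N)%nat -> u i = v i) -> csum u N = csum v N.
Proof. induction N; intros H; simpl. apply H; lia. rewrite IHN by (intros; apply H; lia). rewrite H by lia. reflexivity. Qed.

Lemma rsum_nonneg u N : (forall i, 0 <= u i) -> 0 <= rsum u N.
Proof. intros H; induction N; simpl; [apply H| specialize (H (S N)); lra]. Qed.
Lemma rsum_le u v N : (forall i, u i <= v i) -> rsum u N <= rsum v N.
Proof. intros H; induction N; simpl; [apply H| specialize (H (S N)); lra]. Qed.
Lemma rsum_scal a u N : rsum (fun i => a * u i) N = a * rsum u N.
Proof. induction N; simpl; [|rewrite IHN]; ring. Qed.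
Lemma rsum_plus u v N : rsum (fun i => u i + v i) N = rsum u N + rsum v N.
Proof. induction N; simpl; [|rewrite IHN]; ring. Qed.
Lemma rsum_zero N : rsum (fun _ => 0) N = 0.
Proof. induction N; simpl; [|rewrite IHN]; ring. Qed.
Lemma rsum_mono u N M : (forall i, 0 <= u i) -> (N <= M)%nat -> rsum u N <= rsum u M.
Proof. intros H HNM; induction HNM; simpl. lra. specialize (H (S m)); lra. Qed.
Lemma rsum_term u N j : (forall i, 0 <= u i) -> (j <= N)%nat -> u j <= rsum u N.
Proof.
  intros H Hj. induction Hj. destruct j; simpl. lra.
  pose proof (rsum_nonneg u j H); lra.
  simpl. specialize (H (S m)); lra.
Qed.
Lemma rsum_block u p q : (p <= q)%nat ->
  rsum (fun i => if lt_dec p i then u i else 0) q = rsum u q - rsum u p.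
Proof.
  intros H. induction H.
  - induction p; simpl. destruct (lt_dec 0 0); [lia|ring].
    rewrite (rsum_ext _ (fun _ => 0)). rewrite rsum_zero. destruct (lt_dec (S p) (S p)); [lia|ring].
    intros i Hi. destruct (lt_dec (S p) i); [lia|reflexivity].
  - simpl. rewrite IHle. destruct (lt_dec p (S m)); [ring|lia].
Qed.
Lemma rsum_const_after u M p : (forall i, (M < i)%nat -> u i = 0) -> (M <= p)%nat -> rsum u p = rsum u M.
Proof. intros H Hp; induction Hp; simpl. reflexivity. rewrite H by lia. rewrite IHHp. ring. Qed.

Lemma csum_zero N : csum (fun _ => RtoC 0) N = RtoC 0.
Proof. induction N; simpl; [|rewrite IHN]; try reflexivity; ring. Qed.
Lemma csum_plus u v N : csum (fun i => Cplus (u i) (v i)) N = Cplus (csum u N) (csum v N).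
Proof. induction N; simpl; [|rewrite IHN]; try reflexivity; ring. Qed.
Lemma csum_mult_r u a N : csum (fun i => Cmult (u i) a) N = Cmult (csum u N) a.
Proof. induction N; simpl; [|rewrite IHN]; try reflexivity; ring. Qed.
Lemma csum_conj u N : csum (fun i => Cconj (u i)) N = Cconj (csum u N).
Proof. induction N; simpl; [|rewrite IHN, Cplus_conj]; reflexivity. Qed.
Lemma csum_R u N : csum (fun i => RtoC (u i)) N = RtoC (rsum u N).
Proof. induction N; simpl; [|rewrite IHN]. reflexivity. unfold RtoC, Cplus; simpl; f_equal; ring. Qed.
Lemma csum_split u N M : (N <= M)%nat ->
  csum u M = Cplus (csum u N) (csum (fun i => if lt_dec N i then u i else RtoC 0) M).
Proof.
  intros H. induction H.
  - rewrite (csum_ext (fun i => if lt_dec N i then u i else RtoC 0) (fun _ => RtoC 0)). rewrite csum_zero. ring.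
    intros i Hi. destruct (lt_dec N i); [lia|reflexivity].
  - simpl. rewrite IHle. destruct (lt_dec N (S m)); [ring|lia].
Qed.
Lemma Cmod_csum_le u N : Cmod (csum u N) <= rsum (fun i => Cmod (u i)) N.
Proof. induction N; simpl. lra. eapply Rle_trans. apply Cmod_triangle. lra. Qed.

(* Cauchy-Schwarz-like bound, sqrt-free *)
Lemma amgm_term r a b al : 0 < r -> 0 < al -> 0 <= a -> 0 <= b ->
  r * (a * b) <= (al * r ^ 2 * a ^ 2 + b ^ 2 / al) / 2.
Proof.
  intros Hr Hal Ha Hb.
  assert (H : 0 <= (al * r * a - b) ^ 2) by apply pow2_ge_0.
  assert (E : (al * r ^ 2 * a ^ 2 + b ^ 2 / al) / 2 - r * (a * b) = (al * r * a - b) ^ 2 / (2 * al)).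
  { field. lra. }
  assert (0 <= (al * r * a - b) ^ 2 / (2 * al)). { apply Rdiv_le_0_compat; lra. }
  lra.
Qed.

Lemma CS_bound (c y : nat -> C) N r al :
  0 <= r -> 0 < al -> rsum (fun i => Cmod (y i) ^ 2) N <= r ^ 2 ->
  Cmod (csum (fun i => Cmult (c i) (y i)) N) <=
    r * (al * rsum (fun i => Cmod (c i) ^ 2) N + / al) / 2.
Proof.
  intros Hr Hal Hy.
  eapply Rle_trans. apply Cmod_csum_le.
  rewrite (rsum_ext _ (fun i => Cmod (c i) * Cmod (y i))) by (intros; apply Cmod_mult).
  destruct (Req_dec r 0) as [E|Hr'].
  - subst r. rewrite (rsum_ext _ (fun _ => 0)). rewrite rsum_zero. lra.
    intros i Hi. assert (Cmod (y i) ^ 2 <= 0).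
    { eapply Rle_trans. apply (rsum_term (fun i => Cmod (y i) ^ 2) N i). intros; apply pow2_ge_0. lia. lra. }
    assert (Cmod (y i) = 0). { pose proof (Cmod_ge_0 (y i)). nra. } rewrite H0; ring.
  - assert (0 < r) by lra.
    apply Rmult_le_reg_l with r. lra.
    eapply Rle_trans with ((al * r^2 * rsum (fun i => Cmod (c i) ^ 2) N + rsum (fun i => Cmod (y i) ^ 2) N / al) / 2).
    + rewrite <- rsum_scal. unfold Rdiv. rewrite Rmult_comm with (r1 := rsum (fun i => Cmod (y i) ^ 2) N).
      rewrite <- rsum_scal. rewrite <- rsum_scal. rewrite <- rsum_plus.
      rewrite Rmult_comm. rewrite <- rsum_scal. apply rsum_le. intros i.
      pose proof (amgm_term r (Cmod (c i)) (Cmod (y i)) al H Hal (Cmod_ge_0 _) (Cmod_ge_0 _)).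
      unfold Rdiv in H0. nra.
    + assert (rsum (fun i => Cmod (y i) ^ 2) N / al <= r ^ 2 / al).
      { unfold Rdiv. apply Rmult_le_compat_r. left; apply Rinv_0_lt_compat; lra. lra. }
      assert (E : r * (r * (al * rsum (fun i => Cmod (c i) ^ 2) N + / al) / 2) =
                  (al * r ^ 2 * rsum (fun i => Cmod (c i) ^ 2) N + r ^ 2 / al) / 2) by (field; lra).
      rewrite E. lra.
Qed.

Lemma key_real S K : 0 <= S -> 0 <= K -> S <= K * (/ (K + 1) * S + / / (K + 1)) / 2 -> S <= (K + 1) ^ 2.
Proof.
  intros HS HK H. rewrite Rinv_inv in H.
  assert (E : K * (/ (K + 1) * S + (K + 1)) / 2 = (K / (K+1)) * S / 2 + K * (K + 1) / 2) by (field; lra).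
  rewrite E in H.
  assert (K / (K+1) <= 1). { apply Rmult_le_reg_r with (K+1). lra. unfold Rdiv. rewrite Rmult_assoc, Rinv_l by lra. lra. }
  assert (0 <= K / (K+1)). { apply Rdiv_le_0_compat; lra. }
  nra.
Qed.

Lemma lim0_spec (u : nat -> R) :
  is_lim_seq u 0 <-> (forall eps, 0 < eps -> exists N, forall n, (N <= n)%nat -> Rabs (u n) < eps).
Proof.
  rewrite <- is_lim_seq_spec. simpl. split.
  - intros H eps He. destruct (H (mkposreal eps He)) as [N HN]. exists N. intros n Hn.
    specialize (HN n Hn). simpl in HN. rewrite Rminus_0_r in HN. exact HN.
  - intros H eps. destruct (H eps (cond_pos eps)) as [N HN]. exists N. intros n Hn.
    rewrite Rminus_0_r. auto.
Qed.

Lemma lim0_le (u v : nat -> R) : (forall n, 0 <= u n <= v n) -> is_lim_seq v 0 -> is_lim_seq u 0.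
Proof.
  intros H Hv. apply is_lim_seq_le_le with (fun _ => 0) v. exact H.
  apply is_lim_seq_const. exact Hv.
Qed.

Lemma lim0_plus (u v : nat -> R) : is_lim_seq u 0 -> is_lim_seq v 0 -> is_lim_seq (fun n => u n + v n) 0.
Proof. intros Hu Hv. replace 0 with (0 + 0) by ring. apply is_lim_seq_plus'; auto. Qed.
Lemma lim0_scal (u : nat -> R) a : is_lim_seq u 0 -> is_lim_seq (fun n => a * u n) 0.
Proof. intros Hu. replace 0 with (a * 0) by ring. apply (is_lim_seq_scal_l u a 0). auto. Qed.
Lemma lim0_shift (u : nat -> R) : is_lim_seq u 0 -> is_lim_seq (fun n => u (S n)) 0.
Proof. intros H. apply (is_lim_seq_incr_1 u 0). auto. Qed.

Lemma lim0_eventually (u : nat -> R) N : (forall n, (N <= n)%nat -> u n = 0) -> is_lim_seq u 0.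
Proof.
  intros H. apply lim0_spec. intros eps He. exists N. intros n Hn. rewrite H by auto. rewrite Rabs_R0. auto.
Qed.

Lemma finite_bound (u : nat -> R) N : exists M, forall n, (n <= N)%nat -> u n <= M.
Proof.
  induction N. exists (u O). intros n Hn. replace n with O by lia. lra.
  destruct IHN as [M HM]. exists (Rmax M (u (S N))). intros n Hn.
  destruct (Nat.eq_dec n (S N)). subst. apply Rmax_r. eapply Rle_trans. apply HM. lia. apply Rmax_l.
Qed.

Lemma lim0_bounded (a : seqC) : is_lim_seq (fun n => Cmod (a n)) 0 -> exists M, forall n, Cmod (a n) <= M.
Proof.
  intros H. pose proof (proj1 (lim0_spec _) H) as H2. destruct (H2 1 Rlt_0_1) as [N HN].
  destruct (finite_bound (fun n => Cmod (a n)) N) as [M HM].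
  exists (Rmax M 1). intros n. destruct (le_lt_dec n N).
  eapply Rle_trans. apply HM; auto. apply Rmax_l.
  specialize (HN n ltac:(lia)). rewrite Rabs_pos_eq in HN by apply Cmod_ge_0.
  eapply Rle_trans. left; exact HN. apply Rmax_r.
Qed.

Lemma inA_lim0 (a : seqC) : is_lim_seq (fun n => Cmod (a n)) 0 -> inA a.
Proof.
  intros H. split. apply lim0_bounded; auto.
  apply lim0_le with (fun n => Cmod (a (S n)) + Cmod (a n)).
  - intros n. split. apply Cmod_ge_0. unfold Cminus.
    eapply Rle_trans. apply Cmod_triangle. rewrite Cmod_opp. lra.
  - apply lim0_plus; auto. apply (lim0_shift (fun n => Cmod (a n))); auto.
Qed.

Lemma inA_conj (a : seqC) : inA a -> inA (fun n => Cconj (a n)).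
Proof.
  intros [[M HM] Hl]. split. exists M. intros n. rewrite Cmod_conj. auto.
  eapply is_lim_seq_ext; [|exact Hl]. intros n. simpl. rewrite <- Cminus_conj, Cmod_conj. reflexivity.
Qed.

Lemma inA_plus (a b : seqC) : inA a -> inA b -> inA (fun n => Cplus (a n) (b n)).
Proof.
  intros [[M HM] Hl] [[M' HM'] Hl']. split. exists (M + M'). intros n.
  eapply Rle_trans. apply Cmod_triangle. specialize (HM n); specialize (HM' n); lra.
  apply lim0_le with (fun n => Cmod (Cminus (a (S n)) (a n)) + Cmod (Cminus (b (S n)) (b n))).
  intros n. split. apply Cmod_ge_0.
  replace (Cminus (Cplus (a (S n)) (b (S n))) (Cplus (a n) (b n))) with
     (Cplus (Cminus (a (S n)) (a n)) (Cminus (b (S n)) (b n))) by ring. apply Cmod_triangle.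
  apply lim0_plus; auto.
Qed.

Lemma inA_mult (a b : seqC) : inA a -> inA b -> inA (fun n => Cmult (a n) (b n)).
Proof.
  intros [[M HM] Hl] [[M' HM'] Hl']. split. exists (M * M'). intros n.
  rewrite Cmod_mult. apply Rmult_le_compat; auto; apply Cmod_ge_0.
  assert (M0 : 0 <= M) by (eapply Rle_trans; [apply Cmod_ge_0|apply (HM O)]).
  assert (M0' : 0 <= M') by (eapply Rle_trans; [apply Cmod_ge_0|apply (HM' O)]).
  apply lim0_le with (fun n => M * Cmod (Cminus (b (S n)) (b n)) + M' * Cmod (Cminus (a (S n)) (a n))).
  intros n. split. apply Cmod_ge_0.
  replace (Cminus (Cmult (a (S n)) (b (S n))) (Cmult (a n) (b n))) with
     (Cplus (Cmult (a (S n)) (Cminus (b (S n)) (b n))) (Cmult (b n) (Cminus (a (S n)) (a n)))) by ring.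
  eapply Rle_trans. apply Cmod_triangle. rewrite !Cmod_mult.
  apply Rplus_le_compat; apply Rmult_le_compat_r; auto; apply Cmod_ge_0.
  apply lim0_plus; apply lim0_scal; auto.
Qed.

Lemma inA_const (z : C) : inA (fun _ => z).
Proof.
  split. exists (Cmod z). intros; lra.
  apply lim0_eventually with O. intros n _. replace (Cminus z z) with (RtoC 0) by ring. apply Cmod_0.
Qed.

Lemma inA_eventually0 (a : seqC) N : (forall n, (N <= n)%nat -> a n = RtoC 0) -> inA a.
Proof.
  intros H. apply inA_lim0. apply lim0_eventually with N. intros n Hn. rewrite H by auto. apply Cmod_0.
Qed.

Definition dm (m : nat) (z : C) : seqC := fun n => if Nat.eq_dec n m then z else RtoC 0.
Lemma inA_dm m z : inA (dm m z).
Proof. apply inA_eventually0 with (S m). intros n Hn. unfold dm. destruct (Nat.eq_dec n m); [lia|auto]. Qed.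

Lemma psum_nonneg x m N : 0 <= psum x m N.
Proof. rewrite psum_rsum. apply rsum_nonneg. intros; apply pow2_ge_0. Qed.
Lemma psum_mono x m N M : (N <= M)%nat -> psum x m N <= psum x m M.
Proof. intros H. rewrite !psum_rsum. apply rsum_mono; auto. intros; apply pow2_ge_0. Qed.
Lemma psum_term x m N j : (j <= N)%nat -> Cmod (x j m) ^ 2 <= psum x m N.
Proof. intros H. rewrite psum_rsum. apply (rsum_term (fun i => Cmod (x i m) ^ 2)); auto. intros; apply pow2_ge_0. Qed.

Lemma sq_le_le a r : 0 <= a -> 0 <= r -> a ^ 2 <= r ^ 2 -> a <= r.
Proof. intros. nra. Qed.

Lemma rsum_le_upto u v N : (forall i, (i <= N)%nat -> u i <= v i) -> rsum u N <= rsum v N.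
Proof. induction N; intros H; simpl. apply H; lia. pose proof (IHN ltac:(intros; apply H; lia)). specialize (H (S N) ltac:(lia)). lra. Qed.

Lemma inA_bound_upto (y : HAraw) N : (forall i, inA (y i)) -> exists M, 0 <= M /\ forall i n, (i <= N)%nat -> Cmod (y i n) <= M.
Proof.
  intros H. induction N.
  - destruct (H O) as [[M HM] _]. exists (Rmax 0 M). split. apply Rmax_l. intros i n Hi. replace i with O by lia.
    eapply Rle_trans. apply HM. apply Rmax_r.
  - destruct IHN as [M [HM0 HM]]. destruct (H (S N)) as [[M' HM'] _]. exists (Rmax M M'). split.
    eapply Rle_trans. apply HM0. apply Rmax_l.
    intros i n Hi. destruct (Nat.eq_dec i (S N)). subst. eapply Rle_trans. apply HM'. apply Rmax_r.
    eapply Rle_trans. apply HM. lia. apply Rmax_l.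
Qed.

Lemma inHA_bounded y : inHA y -> exists r, HA_norm_le y r.
Proof.
  intros [HA HC]. destruct (HC 1 Rlt_0_1) as [N0 HN0].
  destruct (inA_bound_upto y N0 HA) as [M [HM0 HM]].
  set (B := rsum (fun _ => M ^ 2) N0).
  assert (HB : forall m, psum y m N0 <= B).
  { intros m. rewrite psum_rsum. apply rsum_le_upto. intros i Hi. apply pow_incr. split. apply Cmod_ge_0. auto. }
  assert (B0 : 0 <= B). { apply rsum_nonneg. intros; apply pow2_ge_0. }
  exists (B + 2). split. lra. intros m N.
  destruct (le_lt_dec N N0).
  - eapply Rle_trans. apply psum_mono; eauto. eapply Rle_trans. apply HB. nra.
  - specialize (HN0 N N0 m ltac:(lia) ltac:(lia)). apply Rabs_lt_between in HN0. specialize (HB m). nra.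
Qed.

Lemma inHA_finsupp y M : (forall i, inA (y i)) -> (forall i n, (M < i)%nat -> y i n = RtoC 0) -> inHA y.
Proof.
  intros HA H. split; auto. intros eps He. exists M. intros p q m Hp Hq.
  assert (E : forall p, (M <= p)%nat -> psum y m p = psum y m M).
  { intros p' Hp'. rewrite !psum_rsum. apply rsum_const_after; auto. intros i Hi. rewrite H by auto. rewrite Cmod_0. ring. }
  rewrite (E p), (E q) by auto. rewrite Rminus_diag, Rabs_R0. auto.
Qed.

Definition trunc (y : HAraw) M : HAraw := fun i n => if le_dec i M then y i n else RtoC 0.
Definition tail (y : HAraw) M : HAraw := fun i n => if lt_dec M i then y i n else RtoC 0.
Definition e (j : nat) : HAraw := fun i n => if Nat.eq_dec i j then RtoC 1 else RtoC 0.

Lemma inHA_trunc y M : inHA y -> inHA (trunc y M).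
Proof.
  intros [HA _]. apply inHA_finsupp with M.
  intros i. unfold trunc. destruct (le_dec i M). apply HA. apply inA_const.
  intros i n Hi. unfold trunc. destruct (le_dec i M); [lia|reflexivity].
Qed.

Lemma inHA_e j : inHA (e j).
Proof.
  apply inHA_finsupp with j. intros i. apply inA_const.
  intros i n Hi. unfold e. destruct (Nat.eq_dec i j); [lia|reflexivity].
Qed.

Lemma inHA_e_act j a : inA a -> inHA (HA_act (e j) a).
Proof.
  intros Ha. apply inHA_finsupp with j. intros i. unfold HA_act. apply inA_mult. apply inA_const. auto.
  intros i n Hi. unfold HA_act, e. destruct (Nat.eq_dec i j); [lia|ring].
Qed.

Lemma psum_tail y M m p : (M <= p)%nat -> psum (tail y M) m p = psum y m p - psum y m M.
Proof.
  intros H. rewrite !psum_rsum. rewrite <- rsum_block by auto. apply rsum_ext. intros i _.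
  unfold tail. destruct (lt_dec M i). reflexivity. rewrite Cmod_0. ring.
Qed.

Lemma psum_tail_any y M m p : psum (tail y M) m p <= psum (tail y M) m (max p M).
Proof. apply psum_mono. lia. Qed.

Lemma inHA_tail y M : inHA y -> inHA (tail y M).
Proof.
  intros [HA HC]. split.
  intros i. unfold tail. destruct (lt_dec M i). apply HA. apply inA_const.
  intros eps He. destruct (HC eps He) as [N HN]. exists (max N M). intros p q m Hp Hq.
  rewrite !psum_tail by lia. replace (psum y m p - psum y m M - (psum y m q - psum y m M)) with (psum y m p - psum y m q) by ring.
  apply HN; lia.
Qed.

Lemma tail_small y : inHA y -> forall d, 0 < d -> exists M0, forall M, (M0 <= M)%nat -> HA_norm_le (tail y M) d.
Proof.
  intros [HA HC] d Hd. destruct (HC (d ^ 2) ltac:(nra)) as [N HN]. exists N. intros M HM. split. lra.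
  intros m p. eapply Rle_trans. apply psum_tail_any. rewrite psum_tail by lia.
  specialize (HN (max p M) M m ltac:(lia) ltac:(lia)). apply Rabs_lt_between in HN. lra.
Qed.

Lemma trunc_tail y M : HA_add (trunc y M) (tail y M) = y.
Proof.
  apply functional_extensionality; intro i; apply functional_extensionality; intro n.
  unfold HA_add, trunc, tail. destruct (le_dec i M), (lt_dec M i); try lia; ring.
Qed.

Lemma trunc_S y M : trunc y (S M) = HA_add (trunc y M) (HA_act (e (S M)) (y (S M))).
Proof.
  apply functional_extensionality; intro i; apply functional_extensionality; intro n.
  unfold HA_add, HA_act, trunc, e. destruct (le_dec i (S M)), (le_dec i M), (Nat.eq_dec i (S M)); try lia; try subst; ring.
Qed.

Lemma trunc_0 y : trunc y 0 = HA_act (e 0) (y 0%nat).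
Proof.
  apply functional_extensionality; intro i; apply functional_extensionality; intro n.
  unfold HA_act, trunc, e. destruct (le_dec i 0), (Nat.eq_dec i 0); try lia; try subst; ring.
Qed.

Lemma dual_trunc f y M : in_dual f -> inHA y ->
  f (trunc y M) = fun n => csum (fun i => Cmult (f (e i) n) (y i n)) M.
Proof.
  intros [Hv [Hadd [Hact _]]] Hy. pose proof Hy as [HA _].
  induction M.
  - rewrite trunc_0. rewrite Hact. reflexivity. apply inHA_e. apply HA.
  - rewrite trunc_S. rewrite Hadd. rewrite IHM. rewrite Hact. reflexivity.
    apply inHA_e. apply HA. apply inHA_trunc; auto. apply inHA_e_act. apply HA.
Qed.

Lemma dual_split f y M : in_dual f -> inHA y ->
  f y = fun n => Cplus (f (trunc y M) n) (f (tail y M) n).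
Proof.
  intros [Hv [Hadd _]] Hy. rewrite <- Hadd. rewrite trunc_tail. reflexivity.
  apply inHA_trunc; auto. apply inHA_tail; auto.
Qed.

Definition coord (j : nat) : dualT := fun y => y j.

Lemma in_dual_coord j : in_dual (coord j).
Proof.
  split; [|split; [|split]].
  - intros x [HA _]. apply HA.
  - intros; reflexivity.
  - intros; reflexivity.
  - exists 1. split. lra. intros x r _ [Hr Hn] n. unfold coord. rewrite Rmult_1_l.
    apply sq_le_le. apply Cmod_ge_0. auto. eapply Rle_trans. apply (psum_term x n j j). lia. apply Hn.
Qed.

Lemma in_dual_add f g : in_dual f -> in_dual g -> in_dual (dual_add f g).
Proof.
  intros [Hv [Had [Hac [K [HK HKb]]]]] [Hv' [Had' [Hac' [K' [HK' HKb']]]]].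
  split; [|split; [|split]]; unfold dual_add.
  - intros x Hx. apply inA_plus; auto.
  - intros x y Hx Hy. rewrite Had, Had' by auto. apply functional_extensionality; intros n. ring.
  - intros x a Hx Ha. rewrite Hac, Hac' by auto. apply functional_extensionality; intros n. ring.
  - exists (K + K'). split. lra. intros x r Hx Hr n. eapply Rle_trans. apply Cmod_triangle.
    specialize (HKb x r Hx Hr n). specialize (HKb' x r Hx Hr n). lra.
Qed.

Lemma in_dual_act f a : in_dual f -> inA a -> in_dual (dual_act f a).
Proof.
  intros [Hv [Had [Hac [K [HK HKb]]]]] Ha. pose proof Ha as [[Ma HMa] _].
  assert (Ma0 : 0 <= Ma) by (eapply Rle_trans; [apply Cmod_ge_0|apply (HMa O)]).
  split; [|split; [|split]]; unfold dual_act.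
  - intros x Hx. apply inA_mult. apply inA_conj; auto. auto.
  - intros x y Hx Hy. rewrite Had by auto. apply functional_extensionality; intros n. ring.
  - intros x b Hx Hb. rewrite Hac by auto. apply functional_extensionality; intros n. ring.
  - exists (Ma * K). split. nra. intros x r Hx Hr n. rewrite Cmod_mult, Cmod_conj.
    rewrite Rmult_assoc. apply Rmult_le_compat; auto; try apply Cmod_ge_0.
    apply HKb; auto.
Qed.

Definition PF (c : nat -> nat -> C) (q : nat -> nat) : dualT :=
  fun y n => csum (fun i => Cmult (c n i) (y i n)) (q n).

Lemma PF_bound c q Kc y r n al : 0 < al ->
  (forall n, rsum (fun i => Cmod (c n i) ^ 2) (q n) <= Kc) -> HA_norm_le y r ->
  Cmod (PF c q y n) <= r * (al * Kc + / al) / 2.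
Proof.
  intros Hal HK [Hr Hy]. unfold PF. eapply Rle_trans. apply CS_bound with (r := r) (al := al); auto.
  rewrite <- psum_rsum. apply Hy.
  specialize (HK n). apply Rmult_le_compat_r. lra. apply Rmult_le_compat_l; auto. nra.
Qed.

Lemma in_dual_PF c q Kc : 0 <= Kc ->
  (forall n, rsum (fun i => Cmod (c n i) ^ 2) (q n) <= Kc) ->
  (forall y, inHA y -> is_lim_seq (fun n => Cmod (PF c q y n)) 0) ->
  in_dual (PF c q).
Proof.
  intros HK0 HK Hl. split; [|split; [|split]].
  - intros x Hx. apply inA_lim0. auto.
  - intros x y _ _. apply functional_extensionality; intros n. unfold PF, HA_add.
    rewrite <- csum_plus. apply csum_ext. intros; ring.
  - intros x a _ _. apply functional_extensionality; intros n. unfold PF, HA_act.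
    rewrite <- csum_mult_r. apply csum_ext. intros; ring.
  - exists ((Kc + 1) / 2). split. lra. intros x r _ Hr n.
    eapply Rle_trans. apply PF_bound with (al := 1); eauto. lra. right. field.
Qed.

Definition comb (c : nat -> C) (m N : nat) : dualT :=
  PF (fun n i => if Nat.eq_dec n m then c i else RtoC 0) (fun _ => N).

Lemma comb_off c m N y n : n <> m -> comb c m N y n = RtoC 0.
Proof.
  intros H. unfold comb, PF. destruct (Nat.eq_dec n m). contradiction.
  transitivity (csum (fun _ => RtoC 0) N). apply csum_ext. intros; ring. apply csum_zero.
Qed.

Lemma in_dual_comb c m N : in_dual (comb c m N).
Proof.
  apply in_dual_PF with (rsum (fun i => Cmod (c i) ^ 2) N).
  apply rsum_nonneg; intros; apply pow2_ge_0.
  intros n. destruct (Nat.eq_dec n m). lra. rewrite (rsum_ext _ (fun _ => 0)). rewrite rsum_zero.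
  apply rsum_nonneg; intros; apply pow2_ge_0. intros; rewrite Cmod_0; ring.
  intros y _. apply lim0_eventually with (S m). intros n Hn. fold (comb c m N).
  rewrite comb_off by lia. apply Cmod_0.
Qed.

Lemma comb_S c m N : comb c m (S N) = dual_add (comb c m N) (dual_act (coord (S N)) (dm m (Cconj (c (S N))))).
Proof.
  apply functional_extensionality; intro y; apply functional_extensionality; intro n.
  unfold comb, PF, dual_add, dual_act, coord, dm. simpl.
  destruct (Nat.eq_dec n m). rewrite Cconj_conj. reflexivity. rewrite Cconj_0. ring.
Qed.

Lemma comb_0 c m : comb c m 0 = dual_act (coord 0) (dm m (Cconj (c O))).
Proof.
  apply functional_extensionality; intro y; apply functional_extensionality; intro n.
  unfold comb, PF, dual_act, coord, dm. simpl.
  destruct (Nat.eq_dec n m). rewrite Cconj_conj. reflexivity. rewrite Cconj_0. ring.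
Qed.

Lemma KEY F c m N : in_bidual F ->
  F (comb c m N) m = csum (fun i => Cmult (F (coord i) m) (Cconj (c i))) N.
Proof.
  intros [Hv [Had [Hac _]]]. induction N.
  - rewrite comb_0. rewrite Hac. simpl. unfold dm. destruct (Nat.eq_dec m m); [reflexivity|contradiction].
    apply in_dual_coord. apply inA_dm.
  - rewrite comb_S. rewrite Had. rewrite Hac. simpl. rewrite IHN. unfold dm.
    destruct (Nat.eq_dec m m); [reflexivity|contradiction].
    apply in_dual_coord. apply inA_dm. apply in_dual_comb. apply in_dual_act. apply in_dual_coord. apply inA_dm.
Qed.

Lemma F_point F f m : in_bidual F -> in_dual f -> F f m = F (dual_act f (dm m (RtoC 1))) m.
Proof.
  intros [_ [_ [Hac _]]] Hf. rewrite Hac by (auto; apply inA_dm). unfold dm.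
  destruct (Nat.eq_dec m m); [|contradiction]. ring.
Qed.

Lemma F_zero F f m : in_bidual F -> in_dual f ->
  (forall y, inHA y -> f y m = RtoC 0) -> F f m = RtoC 0.
Proof.
  intros HF Hf H. rewrite (F_point F f m HF Hf).
  destruct HF as [_ [_ [_ [K [HK HKb]]]]].
  assert (Hd : dual_norm_le (dual_act f (dm m (RtoC 1))) 0).
  { split. lra. intros x s Hx _ n. unfold dual_act, dm. destruct (Nat.eq_dec n m).
    subst. rewrite H by auto. rewrite Cmult_0_r, Cmod_0. lra.
    rewrite Cconj_0, Cmult_0_l, Cmod_0. lra. }
  specialize (HKb _ 0 (in_dual_act f _ Hf (inA_dm m 1)) Hd m).
  rewrite Rmult_0_r in HKb. apply Cmod_eq_0. pose proof (Cmod_ge_0 (F (dual_act f (dm m 1)) m)). lra.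
Qed.

Definition Xof (F : dualT -> seqC) : HAraw := fun i n => Cconj (F (coord i) n).

Lemma rho_sq Sx al : 0 <= Sx -> 0 < al -> Sx <= ((al * Sx + / al) / 2) ^ 2.
Proof.
  intros HS Hal. assert (E : ((al * Sx + / al) / 2) ^ 2 - Sx = ((al * Sx - / al) / 2) ^ 2).
  { field. lra. }
  assert (0 <= ((al * Sx - / al) / 2) ^ 2) by apply pow2_ge_0. lra.
Qed.

Lemma bidual_pointwise_bound F : in_bidual F ->
  exists B, forall m q, psum (Xof F) m q <= B.
Proof.
  intros HF. pose proof HF as [_ [_ [_ [K [HK HKb]]]]].
  exists ((K + 1) ^ 2). intros m q.
  set (Sx := psum (Xof F) m q).
  assert (Sx0 : 0 <= Sx) by apply psum_nonneg.
  set (c := fun i => F (coord i) m).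
  set (al := / (K + 1)).
  assert (Hal : 0 < al) by (apply Rinv_0_lt_compat; lra).
  assert (HFc : F (comb c m q) m = RtoC Sx).
  { rewrite KEY by auto. unfold Sx. rewrite psum_rsum. rewrite <- csum_R. apply csum_ext. intros i _.
    unfold c, Xof. rewrite Cmod_conj. rewrite Cmod2_conj. ring. }
  assert (Hn : dual_norm_le (comb c m q) ((al * Sx + / al) / 2)).
  { split. assert (0 < / al) by (apply Rinv_0_lt_compat; lra). nra.
    intros x s _ Hs n. unfold comb. eapply Rle_trans. apply PF_bound with (Kc := Sx); eauto.
    intros n'. simpl. destruct (Nat.eq_dec n' m).
    - right. unfold Sx. rewrite psum_rsum. apply rsum_ext. intros i _. unfold c, Xof. rewrite Cmod_conj. reflexivity.
    - rewrite (rsum_ext _ (fun _ => 0)). rewrite rsum_zero. auto. intros; rewrite Cmod_0; ring.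
    - right. unfold Rdiv. ring. }
  specialize (HKb _ _ (in_dual_comb c m q) Hn m). rewrite HFc in HKb. rewrite Cmod_R, Rabs_pos_eq in HKb by auto.
  apply key_real; auto. unfold al in HKb. lra.
Qed.

Lemma rsum_trunc_le v M N : (forall i, 0 <= v i) ->
  rsum (fun i => if le_dec i M then v i else 0) N <= rsum v M.
Proof.
  intros Hv. eapply Rle_trans. apply rsum_mono with (M := max N M). intros i. destruct (le_dec i M); auto; lra. lia.
  rewrite (rsum_const_after _ M). right. apply rsum_ext. intros i Hi. destruct (le_dec i M); [reflexivity|lia].
  intros i Hi. destruct (le_dec i M); [lia|reflexivity]. lia.
Qed.

Lemma dual_coef_bound f : in_dual f -> exists B, forall n M, rsum (fun i => Cmod (f (e i) n) ^ 2) M <= B.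
Proof.
  intros Hf. pose proof Hf as [_ [_ [_ [K [HK HKb]]]]].
  exists ((K + 1) ^ 2). intros n M.
  set (P := rsum (fun i => Cmod (f (e i) n) ^ 2) M).
  assert (P0 : 0 <= P) by (apply rsum_nonneg; intros; apply pow2_ge_0).
  set (u := fun (i : nat) (_ : nat) => if le_dec i M then Cconj (f (e i) n) else RtoC 0).
  assert (Hu : inHA u).
  { apply inHA_finsupp with M. intros i. apply inA_const. intros i n' Hi. unfold u. destruct (le_dec i M); [lia|reflexivity]. }
  assert (Htu : trunc u M = u).
  { apply functional_extensionality; intro i; apply functional_extensionality; intro n'.
    unfold trunc, u. destruct (le_dec i M); reflexivity. }
  assert (Hfu : f u n = RtoC P).
  { rewrite <- Htu. rewrite dual_trunc by auto. unfold P. rewrite <- csum_R. apply csum_ext. intros i Hi.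
    unfold u. destruct (le_dec i M); [|lia]. rewrite Cmod2_conj. reflexivity. }
  set (al := / (K + 1)).
  assert (Hal : 0 < al) by (apply Rinv_0_lt_compat; lra).
  assert (Hn : HA_norm_le u ((al * P + / al) / 2)).
  { split. assert (0 < / al) by (apply Rinv_0_lt_compat; lra). nra.
    intros m' N. eapply Rle_trans. 2: apply rho_sq; auto.
    rewrite psum_rsum. unfold P. eapply Rle_trans. 2: apply (rsum_trunc_le (fun i => Cmod (f (e i) n) ^ 2) M N).
    right. apply rsum_ext. intros i _. unfold u. destruct (le_dec i M). rewrite Cmod_conj. reflexivity. rewrite Cmod_0. ring.
    intros; apply pow2_ge_0. }
  specialize (HKb u _ Hu Hn n). rewrite Hfu in HKb. rewrite Cmod_R, Rabs_pos_eq in HKb by auto.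
  apply key_real; auto. unfold al in HKb. lra.
Qed.

Fixpoint build (ch : nat -> nat -> nat * nat * nat) (k : nat) : nat * nat * nat :=
  match k with O => ch O O | S k' => ch (S k') (S (snd (build ch k'))) end.

Lemma RtoC_mult' a b : RtoC (a * b) = Cmult (RtoC a) (RtoC b).
Proof. unfold RtoC, Cmult; simpl; f_equal; ring. Qed.

Section NoBad.
Variable F : dualT -> seqC.
Hypothesis HF : in_bidual F.
Variable eps : R.
Hypothesis Heps : 0 < eps.
Variable ch : nat -> nat -> nat * nat * nat.
Let X := Xof F.
Hypothesis Hch : forall B m0, (B <= fst (fst (ch B m0)) <= snd (fst (ch B m0)))%nat /\ (m0 < snd (ch B m0))%nat /\
   eps <= psum X (snd (ch B m0)) (snd (fst (ch B m0))) - psum X (snd (ch B m0)) (fst (fst (ch B m0))).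

Let pk k := fst (fst (build ch k)).
Let qk k := snd (fst (build ch k)).
Let nk k := snd (build ch k).
Let Sk k := psum X (nk k) (qk k) - psum X (nk k) (pk k).

Lemma f1 k : (k <= pk k <= qk k)%nat.
Proof. unfold pk, qk. destruct k; simpl; apply Hch. Qed.
Lemma f2 k : (S (nk k) < nk (S k))%nat.
Proof. unfold nk. simpl. apply Hch. Qed.
Lemma f3 k : eps <= Sk k.
Proof. unfold Sk, nk, qk, pk. destruct k; simpl; apply Hch. Qed.

Lemma nk_lt k j : (k < j)%nat -> (S (nk k) < nk j)%nat.
Proof.
  intros H. induction H. apply f2. pose proof (f2 m). lia.
Qed.
Lemma nk_inj k j : nk k = nk j -> k = j.
Proof.
  intros E. destruct (lt_eq_lt_dec k j) as [[H|H]|H]; auto.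
  pose proof (nk_lt _ _ H); lia. pose proof (nk_lt _ _ H); lia.
Qed.
Lemma nk_ge k : (k <= nk k)%nat.
Proof. induction k. lia. pose proof (f2 k). lia. Qed.
Lemma nk_gap k j : nk j <> S (nk k).
Proof.
  intros E. destruct (lt_eq_lt_dec k j) as [[H|H]|H].
  - destruct (Nat.eq_dec j (S k)). subst. pose proof (f2 k). lia.
    assert (S k < j)%nat by lia. pose proof (nk_lt _ _ H0). pose proof (f2 k). lia.
  - subst. lia.
  - pose proof (nk_lt _ _ H). lia.
Qed.

Let kap (n : nat) : nat := epsilon (inhabits O) (fun k => nk k = n).
Lemma kap_spec k : kap (nk k) = k.
Proof.
  apply nk_inj. unfold kap. apply (epsilon_spec (inhabits O) (fun j => nk j = nk k)). exists k. reflexivity.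
Qed.

Let cf (n i : nat) : C := if Nat.eq_dec n (nk (kap n)) then
     (if lt_dec (pk (kap n)) i then Cmult (Cconj (X i n)) (RtoC (/ Sk (kap n))) else RtoC 0) else RtoC 0.
Let qf (n : nat) : nat := qk (kap n).
Let g := PF cf qf.

Lemma Sk_pos k : 0 < Sk k.
Proof. pose proof (f3 k). lra. Qed.

Lemma cf_bound n : rsum (fun i => Cmod (cf n i) ^ 2) (qf n) <= / eps.
Proof.
  unfold cf, qf. remember (kap n) as k. destruct (Nat.eq_dec n (nk k)) as [E|E].
  - subst n. pose proof (Sk_pos k) as Hs. pose proof (f1 k) as Hpq.
    rewrite (rsum_ext _ (fun i => (/ Sk k) ^ 2 * (if lt_dec (pk k) i then Cmod (X i (nk k)) ^ 2 else 0))).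
    + rewrite rsum_scal. rewrite rsum_block by lia. rewrite <- !psum_rsum. fold (Sk k).
      replace ((/ Sk k) ^ 2 * Sk k) with (/ Sk k) by (field; lra).
      apply Rinv_le_contravar; auto. apply f3.
    + intros i _. destruct (lt_dec (pk k) i). rewrite Cmod_mult, Cmod_conj, Cmod_R, Rabs_pos_eq. ring.
      left; apply Rinv_0_lt_compat; auto. rewrite Cmod_0. ring.
  - rewrite (rsum_ext _ (fun _ => 0)). rewrite rsum_zero. left; apply Rinv_0_lt_compat; auto.
    intros; rewrite Cmod_0; ring.
Qed.

Lemma g_off y n : n <> nk (kap n) -> g y n = RtoC 0.
Proof.
  intros H. unfold g, PF, cf. destruct (Nat.eq_dec n (nk (kap n))). contradiction.
  transitivity (csum (fun _ => RtoC 0) (qf n)). apply csum_ext. intros; ring. apply csum_zero.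
Qed.

Lemma g_lim y : inHA y -> is_lim_seq (fun n => Cmod (g y n)) 0.
Proof.
  intros Hy. apply lim0_spec. intros d Hd.
  assert (Hc : 0 < / eps + 1) by (pose proof (Rinv_0_lt_compat eps Heps); lra).
  set (z := d / (/ eps + 1)).
  assert (Hz : 0 < z) by (unfold z; apply Rdiv_lt_0_compat; lra).
  destruct Hy as [_ HC]. destruct (HC (z ^ 2) ltac:(nra)) as [Ny HNy].
  exists (nk Ny). intros n Hn. rewrite Rabs_pos_eq by apply Cmod_ge_0.
  destruct (Nat.eq_dec n (nk (kap n))) as [E|E].
  2: { rewrite g_off by auto. rewrite Cmod_0. auto. }
  remember (kap n) as k.
  assert (Hk : (Ny <= k)%nat).
  { destruct (le_lt_dec Ny k); auto. pose proof (nk_lt _ _ l). lia. }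
  pose proof (f1 k) as Hpq.
  assert (Eg : g y n = csum (fun i => Cmult (cf n i) (if lt_dec (pk k) i then y i n else RtoC 0)) (qk k)).
  { unfold g, PF, qf. rewrite <- Heqk. apply csum_ext. intros i _. unfold cf. rewrite <- Heqk.
    destruct (Nat.eq_dec n (nk k)); [|ring]. destruct (lt_dec (pk k) i); [reflexivity|ring]. }
  rewrite Eg. eapply Rle_lt_trans. apply CS_bound with (r := z) (al := 1). lra. lra.
  - rewrite (rsum_ext _ (fun i => if lt_dec (pk k) i then Cmod (y i n) ^ 2 else 0)).
    rewrite rsum_block by lia. rewrite <- !psum_rsum.
    specialize (HNy (qk k) (pk k) n ltac:(lia) ltac:(lia)). apply Rabs_lt_between in HNy. lra.
    intros i _. destruct (lt_dec (pk k) i). reflexivity. rewrite Cmod_0; ring.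
  - pose proof (cf_bound n) as Hb. unfold qf in Hb. rewrite <- Heqk in Hb.
    assert (z * (1 * rsum (fun i => Cmod (cf n i) ^ 2) (qk k) + / 1) / 2 <= z * (/ eps + 1) / 2).
    { rewrite Rinv_1. apply Rmult_le_compat_r. lra. apply Rmult_le_compat_l. lra. lra. }
    assert (z * (/ eps + 1) / 2 = d / 2) by (unfold z; field; lra). lra.
Qed.

Lemma g_dual : in_dual g.
Proof.
  apply in_dual_PF with (/ eps). left; apply Rinv_0_lt_compat; auto. apply cf_bound. apply g_lim.
Qed.

Lemma Fg_at k : F g (nk k) = RtoC 1.
Proof.
  rewrite (F_point F g (nk k) HF g_dual).
  set (ck := fun i => if lt_dec (pk k) i then Cmult (Cconj (X i (nk k))) (RtoC (/ Sk k)) else RtoC 0).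
  assert (E : dual_act g (dm (nk k) (RtoC 1)) = comb ck (nk k) (qk k)).
  { apply functional_extensionality; intro y; apply functional_extensionality; intro n.
    unfold dual_act, dm. destruct (Nat.eq_dec n (nk k)).
    - subst n. rewrite Cconj_1, Cmult_1_l'. unfold comb, g, PF, qf, cf, ck. rewrite kap_spec.
      destruct (Nat.eq_dec (nk k) (nk k)); [reflexivity|contradiction].
    - rewrite comb_off by auto. rewrite Cconj_0. ring. }
  rewrite E. rewrite KEY by auto.
  pose proof (Sk_pos k) as Hs. pose proof (f1 k) as Hpq.
  transitivity (csum (fun i => RtoC (/ Sk k * (if lt_dec (pk k) i then Cmod (X i (nk k)) ^ 2 else 0))) (qk k)).
  - apply csum_ext. intros i _. unfold ck. destruct (lt_dec (pk k) i).
    + rewrite Cmult_conj, Cconj_conj, Cconj_R. unfold X, Xof at 1. 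
      replace (F (coord i) (nk k)) with (Cconj (X i (nk k))) by (unfold X, Xof; apply Cconj_conj).
      rewrite RtoC_mult'. rewrite <- Cmod_sq_conj. rewrite Cconj_conj. change (Xof F) with X. ring.
    + rewrite Cconj_0. rewrite Rmult_0_r. ring.
  - rewrite csum_R. rewrite rsum_scal. rewrite rsum_block by lia. rewrite <- !psum_rsum. fold (Sk k).
    f_equal. field. lra.
Qed.

Lemma Fg_gap k : F g (S (nk k)) = RtoC 0.
Proof.
  apply F_zero; auto. apply g_dual. intros y _. apply g_off. intro E. symmetry in E. apply (nk_gap k (kap (S (nk k)))). auto.
Qed.

Lemma no_bad : False.
Proof.
  destruct HF as [Hv _]. destruct (Hv g g_dual) as [_ Hl].
  pose proof (proj1 (lim0_spec _) Hl 1 Rlt_0_1) as [N HN].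
  specialize (HN (nk N) (nk_ge N)). rewrite Fg_gap, Fg_at in HN.
  replace (Cminus (RtoC 0) (RtoC 1)) with (Copp (RtoC 1)) in HN by ring.
  rewrite Cmod_opp, Cmod_1, Rabs_R1 in HN. lra.
Qed.
End NoBad.

Lemma psum_cauchy_pt F : in_bidual F -> forall m d, 0 < d ->
  exists N, forall p q, (N <= p)%nat -> (N <= q)%nat -> Rabs (psum (Xof F) m p - psum (Xof F) m q) < d.
Proof.
  intros HF m d Hd. destruct (bidual_pointwise_bound F HF) as [B HB].
  assert (Hex : ex_finite_lim_seq (fun N => psum (Xof F) m N)).
  { apply ex_finite_lim_seq_incr with B. intros; apply psum_mono; lia. intros; apply HB. }
  apply ex_lim_seq_cauchy_corr in Hex. destruct (Hex (mkposreal d Hd)) as [N HN].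
  exists N. intros p q Hp Hq. apply HN; auto.
Qed.

Lemma uniform_upto (P : nat -> nat -> Prop) :
  (forall m, exists N, P m N) -> (forall m N N', (N <= N')%nat -> P m N -> P m N') ->
  forall m0, exists N, forall m, (m <= m0)%nat -> P m N.
Proof.
  intros H Hm m0. induction m0.
  - destruct (H O) as [N HN]. exists N. intros m Hm0. replace m with O by lia. auto.
  - destruct IHm0 as [N HN]. destruct (H (S m0)) as [N' HN']. exists (max N N'). intros m Hm0.
    destruct (Nat.eq_dec m (S m0)). subst. apply Hm with N'. lia. auto.
    apply Hm with N. lia. apply HN. lia.
Qed.

Lemma inHA_X F : in_bidual F -> inHA (Xof F).
Proof.
  intros HF. split.
  { intros i. unfold Xof. apply inA_conj. destruct HF as [Hv _]. apply Hv. apply in_dual_coord. }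
  intros eps Heps. apply NNPP. intro Hno.
  set (X := Xof F).
  assert (Hbad : forall N, exists p q m, (N <= p)%nat /\ (N <= q)%nat /\ eps <= Rabs (psum X m p - psum X m q)).
  { intro N. apply NNPP; intro H1. apply Hno. exists N. intros p q m Hp Hq. apply Rnot_le_lt. intro H2.
    apply H1. exists p, q, m. auto. }
  assert (Hblk : forall B m0, exists t : nat * nat * nat,
    (B <= fst (fst t) <= snd (fst t))%nat /\ (m0 < snd t)%nat /\
    eps <= psum X (snd t) (snd (fst t)) - psum X (snd t) (fst (fst t))).
  { intros B m0.
    destruct (uniform_upto (fun m N => forall p q, (N <= p)%nat -> (N <= q)%nat -> Rabs (psum X m p - psum X m q) < eps))
      with (m0 := m0) as [N' HN'].
    - intros m. apply psum_cauchy_pt; auto.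
    - intros m N N'' HN H p q Hp Hq. apply H; lia.
    - destruct (Hbad (max B N')) as [p [q [m [Hp [Hq Hd]]]]].
      destruct (le_lt_dec m m0) as [Hm|Hm].
      { specialize (HN' m Hm p q ltac:(lia) ltac:(lia)). lra. }
      destruct (le_lt_dec p q) as [Hpq|Hpq].
      + exists (p, q, m). simpl. split; [lia|split; [lia|]].
        rewrite Rabs_minus_sym, Rabs_pos_eq in Hd. auto. pose proof (psum_mono X m p q Hpq). lra.
      + exists (q, p, m). simpl. split; [lia|split; [lia|]].
        rewrite Rabs_pos_eq in Hd. auto. pose proof (psum_mono X m q p ltac:(lia)). lra. }
  assert (Hs : forall B m0, {t : nat * nat * nat |
    (B <= fst (fst t) <= snd (fst t))%nat /\ (m0 < snd t)%nat /\
    eps <= psum X (snd t) (snd (fst t)) - psum X (snd t) (fst (fst t))}).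
  { intros B m0. apply constructive_indefinite_description. apply Hblk. }
  apply (no_bad F HF eps Heps (fun B m0 => proj1_sig (Hs B m0))).
  intros B m0. exact (proj2_sig (Hs B m0)).
Qed.

Lemma le_of_forall_eps a b K : 0 <= K -> (forall d, 0 < d -> a <= b + K * d) -> a <= b.
Proof.
  intros HK H. apply Rnot_lt_le. intro Hc.
  specialize (H ((a - b) / (2 * (K + 1))) ltac:(apply Rdiv_lt_0_compat; lra)).
  assert (K * ((a - b) / (2 * (K + 1))) <= (a - b) / 2).
  { unfold Rdiv. rewrite <- Rmult_assoc. apply Rmult_le_reg_r with (2 * (K + 1)). lra.
    rewrite !Rmult_assoc, Rinv_l by lra. rewrite Rmult_1_r. nra. }
  lra.
Qed.

Lemma Ceq_of_diff (a b : C) : Cminus a b = RtoC 0 -> a = b.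
Proof. intros H. replace a with (Cplus (Cminus a b) b) by ring. rewrite H. ring. Qed.

Lemma claim3 F f : in_bidual F -> in_dual f -> F f = fun n => Cconj (f (Xof F) n).
Proof.
  intros HF Hf. apply functional_extensionality. intro n.
  set (X := Xof F).
  assert (HX : inHA X) by apply inHA_X, HF.
  pose proof HF as [HFv [HFad [HFac [KF [HKF HKFb]]]]].
  pose proof Hf as [Hfv [Hfad [Hfac [Kf [HKf HKfb]]]]].
  apply Ceq_of_diff, C_zero_of_small. intros eta Heta.
  set (gi := fun i => f (e i) n).
  set (z := eta / (2 * (KF + 1))).
  assert (Hz : 0 < z) by (unfold z; apply Rdiv_lt_0_compat; lra).
  set (dx := eta / (2 * (Kf + 1))).
  assert (Hdx : 0 < dx) by (unfold dx; apply Rdiv_lt_0_compat; lra).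
  destruct (dual_coef_bound f Hf) as [Bc HBc].
  assert (Hcv : ex_finite_lim_seq (fun M => rsum (fun i => Cmod (gi i) ^ 2) M)).
  { apply ex_finite_lim_seq_incr with Bc. intros; simpl; pose proof (pow2_ge_0 (Cmod (gi (S n0)))); lra. intros; apply HBc. }
  apply ex_lim_seq_cauchy_corr in Hcv.
  destruct (Hcv (mkposreal (z ^ 2) ltac:(simpl; nra))) as [N0 HN0]. cbn [pos] in HN0.
  destruct (tail_small X HX dx Hdx) as [M0 HM0].
  set (N := max N0 M0).
  set (cmb := comb gi n N).
  set (h := dual_add (dual_act f (dm n (RtoC 1))) (dual_act cmb (fun _ => RtoC (-1)))).
  assert (Hh : in_dual h).
  { apply in_dual_add; apply in_dual_act; auto. apply inA_dm. apply in_dual_comb. apply inA_const. }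
  assert (HFh : F h n = Cminus (F f n) (F cmb n)).
  { unfold h. rewrite HFad. rewrite !HFac. unfold dm. destruct (Nat.eq_dec n n); [|contradiction]. ring.
    apply in_dual_comb. apply inA_const. auto. apply inA_dm.
    apply in_dual_act; auto. apply inA_dm. apply in_dual_act. apply in_dual_comb. apply inA_const. }
  assert (Hhn : dual_norm_le h z).
  { split. lra. intros y s Hy Hs m'. pose proof Hs as [Hs0 Hsy].
    unfold h, dual_add, dual_act, dm. destruct (Nat.eq_dec m' n).
    2: { unfold cmb. rewrite comb_off by auto. rewrite Cconj_0. replace (Cplus _ _) with (RtoC 0) by ring.
         rewrite Cmod_0. nra. }
    subst m'. rewrite Cconj_1, Cconj_R.
    replace (Cplus (Cmult (RtoC 1) (f y n)) (Cmult (RtoC (-1)) (cmb y n))) with (Cminus (f y n) (cmb y n)) by ring.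
    apply (le_of_forall_eps _ _ Kf HKf). intros d Hd.
    destruct (tail_small y Hy d Hd) as [M1 HM1].
    set (M := max M1 N).
    rewrite (dual_split f y M Hf Hy). rewrite (dual_trunc f y M Hf Hy).
    rewrite (csum_split _ N M) by (unfold M; lia).
    assert (Ecmb : cmb y n = csum (fun i => Cmult (f (e i) n) (y i n)) N).
    { unfold cmb, comb, PF. apply csum_ext. intros i _. destruct (Nat.eq_dec n n); [reflexivity|contradiction]. }
    rewrite Ecmb.
    replace (Cminus (Cplus (Cplus (csum (fun i => Cmult (f (e i) n) (y i n)) N)
        (csum (fun i => if lt_dec N i then Cmult (f (e i) n) (y i n) else RtoC 0) M)) (f (tail y M) n))
        (csum (fun i => Cmult (f (e i) n) (y i n)) N))
      with (Cplus (csum (fun i => if lt_dec N i then Cmult (f (e i) n) (y i n) else RtoC 0) M) (f (tail y M) n)) by ring.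
    eapply Rle_trans. apply Cmod_triangle. apply Rplus_le_compat.
    - rewrite (csum_ext _ (fun i => Cmult (if lt_dec N i then gi i else RtoC 0) (y i n))).
      2: { intros i _. destruct (lt_dec N i); [reflexivity|ring]. }
      eapply Rle_trans. apply CS_bound with (r := s) (al := / z); auto. apply Rinv_0_lt_compat; auto.
      rewrite <- psum_rsum. apply Hsy.
      rewrite (rsum_ext _ (fun i => if lt_dec N i then Cmod (gi i) ^ 2 else 0)).
      2: { intros i _. destruct (lt_dec N i); [reflexivity|rewrite Cmod_0; ring]. }
      rewrite rsum_block by (unfold M; lia).
      specialize (HN0 M N ltac:(unfold M, N; lia) ltac:(unfold N; lia)).
      apply Rabs_lt_between in HN0.
      rewrite Rinv_inv.
      assert (E : / z * (rsum (fun i => Cmod (gi i) ^ 2) M - rsum (fun i => Cmod (gi i) ^ 2) N) <= z).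
      { apply Rmult_le_reg_l with z. auto. rewrite <- Rmult_assoc, Rinv_r by lra. rewrite Rmult_1_l. replace (z * z) with (z ^ 2) by ring. lra. }
      assert (s * (/ z * (rsum (fun i => Cmod (gi i) ^ 2) M - rsum (fun i => Cmod (gi i) ^ 2) N) + z) / 2 <= s * (z + z) / 2).
      { apply Rmult_le_compat_r. lra. apply Rmult_le_compat_l; lra. }
      lra.
    - eapply Rle_trans. apply HKfb. apply inHA_tail; auto. apply HM1. unfold M; lia. lra. }
  assert (HFcmb : F cmb n = Cconj (f (trunc X N) n)).
  { unfold cmb. rewrite KEY by auto. rewrite (dual_trunc f X N Hf HX). rewrite <- csum_conj.
    apply csum_ext. intros i _. unfold gi, X, Xof. rewrite Cmult_conj, Cconj_conj. ring. }
  assert (HfX : f X n = Cplus (f (trunc X N) n) (f (tail X N) n)).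
  { rewrite (dual_split f X N Hf HX). reflexivity. }
  replace (Cminus (F f n) (Cconj (f X n))) with (Cminus (F h n) (Cconj (f (tail X N) n))).
  2: { rewrite HFh, HFcmb, HfX, Cplus_conj. ring. }
  unfold Cminus. eapply Rle_trans. apply Cmod_triangle. rewrite Cmod_opp, Cmod_conj.
  assert (H1 : Cmod (F h n) <= KF * z) by (apply (HKFb h z Hh Hhn n)).
  assert (H2 : Cmod (f (tail X N) n) <= Kf * dx).
  { apply HKfb. apply inHA_tail; auto. apply HM0. unfold N; lia. }
  assert (KF * z <= eta / 2).
  { unfold z. unfold Rdiv. rewrite Rinv_mult. apply Rmult_le_reg_r with (KF + 1). lra.
    replace (KF * (eta * (/ 2 * / (KF + 1))) * (KF + 1)) with (KF * eta / 2) by (field; lra). nra. }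
  assert (Kf * dx <= eta / 2).
  { unfold dx. unfold Rdiv. rewrite Rinv_mult. apply Rmult_le_reg_r with (Kf + 1). lra.
    replace (Kf * (eta * (/ 2 * / (Kf + 1))) * (Kf + 1)) with (Kf * eta / 2) by (field; lra). nra. }
  lra.
Qed.

Theorem theorem6p1 : A_Cstar_reflexive.
Proof.
  intros F HF. exists (Xof F). split. apply inHA_X; auto.
  intros f Hf. apply claim3; auto.
Qed.
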